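(* In the setting described in the context, let a stochastic Runge--Kutta method with stages $s$ and random coefficients $Z^{m,n}_{ij}$, $z^{m,n}_i$ be given, and use the same coefficients in the (local) SRK Lawson scheme and in the global SRK Lawson scheme. Then the two schemes produce the same sequence of approximations: $e^{\bar L^0_n}V^0_n=Y_n$ for all $n=0,1,\dots,N$.
   Context: Setting: $d,M\in\mathbb{N}$, $t_0<T$, grid $t_0<t_1<\dots<t_N=T$ with $h=(T-t_0)/N$, $t_n=t_0+nh$. $A_0,\dots,A_M\in\mathbb{R}^{d\times d}$ pairwise commute; $g_m:[t_0,T]\times\mathbb{R}^d\to\mathbb{R}^d$; $\gamma^\star=\tfrac12$ (Itô interpretation) or $\gamma^\star=0$ (Stratonovich interpretation). Set $\Lambda=A_0-\gamma^\star\sum_{m=1}^MA_m^2$, $\tilde g_0=g_0-2\gamma^\star\sum_{m=1}^MA_mg_m$, $\tilde g_m=g_m$ ($m\ge1$). For the SRK coefficients put $c^{n,i}_m=\sum_{j=1}^sZ^{m,n}_{ij}$, $c^n_m=\sum_{i=1}^sz^{m,n}_i$, and assume $c^n_0=h$. Stage equations are assumed uniquely solvable so that both schemes are well defined. Local SRK Lawson scheme: $Y_0=x_0$; for $n=0,\dots,N-1$, with $\Delta L^n_i=\Lambda c^{n,i}_0+\sum_{m=1}^MA_mc^{n,i}_m$ and $\Delta L^n=\Lambda c^n_0+\sum_{m=1}^MA_mc^n_m$, $H_i=Y_n+\sum_{j=1}^s\sum_{m=0}^MZ^{m,n}_{ij}e^{-\Delta L^n_j}\tilde g_m(t_n+c^{n,j}_0,e^{\Delta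 L^n_j}H_j)$, $V^n_{n+1}=Y_n+\sum_{i=1}^s\sum_{m=0}^Mz^{m,n}_ie^{-\Delta L^n_i}\tilde g_m(t_n+c^{n,i}_0,e^{\Delta L^n_i}H_i)$, $Y_{n+1}=e^{\Delta L^n}V^n_{n+1}$. Global SRK Lawson scheme: given $W^0\in\mathbb{R}^{M+1}$ with $W^0_0=t_0$ and $V^0_0=x_0$; for $n=0,\dots,N-1$, with $L^{0,n}_i=\Lambda(t_n+c^{n,i}_0-t_0)+\sum_{m=1}^MA_m(W^n_m+c^{n,i}_m-W^0_m)$, $H^0_i=V^0_n+\sum_{j=1}^s\sum_{m=0}^MZ^{m,n}_{ij}e^{-L^{0,n}_j}\tilde g_m(t_n+c^{n,j}_0,e^{L^{0,n}_j}H^0_j)$, $V^0_{n+1}=V^0_n+\sum_{i=1}^s\sum_{m=0}^Mz^{m,n}_ie^{-L^{0,n}_i}\tilde g_m(t_n+c^{n,i}_0,e^{L^{0,n}_i}H^0_i)$, $W^{n+1}_m=W^n_m+c^n_m$ ($m=0,\dots,M$); its output is $e^{\bar L^0_n}V^0_n$ with $\bar L^0_n=\Lambda(t_n-t_0)+\sum_{m=1}^MA_m(W^n_m-W^0_m)$. *)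

(* Defs.v *)
From HB Require Import structures.
From mathcomp Require Import all_boot all_order all_algebra.
From mathcomp Require Import all_classical all_reals all_analysis.
Set Implicit Arguments. Unset Strict Implicit. Unset Printing Implicit Defensive.
Import Order.TTheory GRing.Theory Num.Theory.
Import numFieldNormedType.Exports.
Local Open Scope ring_scope.

Definition mexp (R : realType) (d : nat) (A : 'M[R]_d) : 'M[R]_d :=
  limn (series (fun k : nat => (k`!%:R)^-1 *: A ^+ k)).

(* Data of the SRK Lawson schemes.  Indices m range over 'I_M.+1 = {0,...,M};
   stage indices over 'I_s.  Vectors of R^d are column vectors 'cV[R]_d.
   Z n m i j = Z^{m,n}_{ij},  z n m i = z^{m,n}_i. *)
Section SRKLawson.
Variables (R : realType) (d M s N : nat) (t0 T gam : R).
Variables (A : 'I_M.+1 -> 'M[R]_d) (g : 'I_M.+1 -> R -> 'cV[R]_d -> 'cV[R]_d).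
Variables (Z : nat -> 'I_M.+1 -> 'I_s -> 'I_s -> R) (z : nat -> 'I_M.+1 -> 'I_s -> R).
Variable (W0 : 'I_M.+1 -> R).

Definition step_h : R := (T - t0) / N%:R.
Definition tgrid (n : nat) : R := t0 + n%:R * step_h.

Definition Lam : 'M[R]_d := A ord0 - gam *: \sum_(m < M.+1 | (0 < m)%N) A m ^+ 2.

Definition gtil (m : 'I_M.+1) (t : R) (x : 'cV[R]_d) : 'cV[R]_d :=
  if m == ord0 then
    g ord0 t x - (2 * gam) *: \sum_(k < M.+1 | (0 < k)%N) (A k *m g k t x)
  else g m t x.

Definition cst (n : nat) (i : 'I_s) (m : 'I_M.+1) : R := \sum_(j < s) Z n m i j.
Definition cw (n : nat) (m : 'I_M.+1) : R := \sum_(i < s) z n m i.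

Definition DLst (n : nat) (i : 'I_s) : 'M[R]_d :=
  cst n i ord0 *: Lam + \sum_(m < M.+1 | (0 < m)%N) cst n i m *: A m.
Definition DL (n : nat) : 'M[R]_d :=
  cw n ord0 *: Lam + \sum_(m < M.+1 | (0 < m)%N) cw n m *: A m.

Definition local_incr (n : nat) (coef : 'I_M.+1 -> 'I_s -> R) (Hs : 'I_s -> 'cV[R]_d)
  : 'cV[R]_d :=
  \sum_(j < s) \sum_(m < M.+1)
     coef m j *: (mexp (- DLst n j) *m
        gtil m (tgrid n + cst n j ord0) (mexp (DLst n j) *m Hs j)).

Definition local_stage_eq (n : nat) (y : 'cV[R]_d) (Hs : 'I_s -> 'cV[R]_d) : Prop :=
  forall i : 'I_s, Hs i = y + local_incr n (fun m j => Z n m i j) Hs.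

Definition local_update (n : nat) (y : 'cV[R]_d) (Hs : 'I_s -> 'cV[R]_d) : 'cV[R]_d :=
  mexp (DL n) *m (y + local_incr n (fun m i => z n m i) Hs).

Definition L0st (W : 'I_M.+1 -> R) (n : nat) (i : 'I_s) : 'M[R]_d :=
  (tgrid n + cst n i ord0 - t0) *: Lam
  + \sum_(m < M.+1 | (0 < m)%N) (W m + cst n i m - W0 m) *: A m.

Definition Lbar (W : 'I_M.+1 -> R) (n : nat) : 'M[R]_d :=
  (tgrid n - t0) *: Lam + \sum_(m < M.+1 | (0 < m)%N) (W m - W0 m) *: A m.

Definition global_incr (W : 'I_M.+1 -> R) (n : nat) (coef : 'I_M.+1 -> 'I_s -> R)
  (Hs : 'I_s -> 'cV[R]_d) : 'cV[R]_d :=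
  \sum_(j < s) \sum_(m < M.+1)
     coef m j *: (mexp (- L0st W n j) *m
        gtil m (tgrid n + cst n j ord0) (mexp (L0st W n j) *m Hs j)).

Definition global_stage_eq (W : 'I_M.+1 -> R) (n : nat) (v : 'cV[R]_d)
  (Hs : 'I_s -> 'cV[R]_d) : Prop :=
  forall i : 'I_s, Hs i = v + global_incr W n (fun m j => Z n m i j) Hs.

Definition global_update (W : 'I_M.+1 -> R) (n : nat) (v : 'cV[R]_d)
  (Hs : 'I_s -> 'cV[R]_d) : 'cV[R]_d :=
  v + global_incr W n (fun m i => z n m i) Hs.

End SRKLawson.

(* Main.v *)
Require Import Defs.
From HB Require Import structures.
From mathcomp Require Import all_boot all_order all_algebra.
From mathcomp Require Import all_classical all_reals all_analysis.
From mathcomp Require Import ring lra.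
Import Order.TTheory GRing.Theory Num.Theory.
Import numFieldNormedType.Exports.
Local Open Scope ring_scope.

HB.instance Definition _ (R : realType) (m n : nat) := Complete.on 'M[R]_(m, n).

Lemma square_split (V : zmodType) (f : nat -> nat -> V) n :
  \sum_(i < n) \sum_(j < n) f i j =
  \sum_(i < n) \sum_(j < n - i) f i j + \sum_(i < n) \sum_(n - i <= j < n) f i j.
Proof.
rewrite -big_split /=; apply: eq_bigr => i _.
rewrite -(big_mkord xpredT (f i)).
rewrite (@big_cat_nat _ _ _ (n - i)) ?leq_subr //= big_mkord //.
Qed.

Lemma cauchy_tri (V : zmodType) (f : nat -> nat -> V) n :
  \sum_(k < n) \sum_(i < k.+1) f i (k - i)%N = \sum_(i < n) \sum_(j < n - i) f i j.
Proof.
elim: n => [|n IH]; first by rewrite !big_ord0.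
rewrite big_ord_recr /= IH [RHS]big_ord_recr /= subSnn big_ord1.
rewrite [in RHS](eq_bigr (fun i : 'I_n => \sum_(j < n - i) f i j + f i (n - i)%N)); last first.
  by move=> i _; rewrite subSn ?(ltnW (ltn_ord i)) // big_ord_recr.
by rewrite big_split /= [X in _ + X = _]big_ord_recr /= subnn addrA.
Qed.

Section Bin.
Variables (R : realType) (d : nat).

Lemma fact_coef (k i : nat) : (i <= k)%N ->
  (k`!%:R : R)^-1 * 'C(k, i)%:R = (i`!%:R)^-1 * ((k - i)`!%:R)^-1.
Proof.
move=> ik; have h := bin_fact ik.
have h' : ('C(k, i)%:R : R) * (i`!%:R * (k - i)`!%:R) = k`!%:R.
  by rewrite -!natrM h.
have f0 : forall n, (n`!%:R : R) != 0 by move=> n; rewrite pnatr_eq0 -lt0n fact_gt0.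
rewrite -h'; have := f0 i; have := f0 (k - i)%N; have := f0 k.
rewrite -h' => H1 H2 H3.
field; apply/and3P; split => //.
by move: H1; rewrite !mulf_eq0 negb_or => /andP[].
Qed.

Definition ecm (X : 'M[R]_d) (k : nat) : 'M[R]_d := (k`!%:R)^-1 *: X ^+ k.

Lemma ecm_add (X Y : 'M[R]_d) : X * Y = Y * X -> forall k,
  ecm (X + Y) k = \sum_(i < k.+1) ecm X i * ecm Y (k - i)%N.
Proof.
move=> cXY k; rewrite /ecm addrC (exprDn_comm _ (esym cXY)) scaler_sumr.
apply: eq_bigr => i _.
have cP : Y ^+ (k - i) * X ^+ i = X ^+ i * Y ^+ (k - i).
  exact: (commrX i (commr_sym (commrX (k - i) cXY))).
rewrite cP -[_ *+ 'C(k, i)]scaler_nat scalerA (@fact_coef k i (ltn_ord i)).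
by rewrite -!mulmxE -scalemxAl -scalemxAr scalerA.
Qed.

Lemma ecr_add (a b : R) k :
  exp_coeff (a + b) k = \sum_(i < k.+1) exp_coeff a i * exp_coeff b (k - i)%N.
Proof.
rewrite /exp_coeff /= addrC exprDn mulr_suml; apply: eq_bigr => i _.
rewrite -mulr_natr.
rewrite [LHS](_ : _ = b ^+ (k - i) * a ^+ i * ((k`!%:R)^-1 * 'C(k, i)%:R)); last by ring.
rewrite (@fact_coef k i (ltn_ord i)); ring.
Qed.



Lemma mxn_entry m n (P : 'M[R]_(m, n)) i j : `|P i j| <= `|P|.
Proof.
have -> : `|P| = mx_norm P by [].
rewrite mx_normrE.
exact: (le_bigmax _ (fun ij : 'I_m * 'I_n => `|P ij.1 ij.2|) (i, j)).
Qed.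

Lemma mxn_le m n (P : 'M[R]_(m, n)) c : 0 <= c -> (forall i j, `|P i j| <= c) -> `|P| <= c.
Proof.
move=> c0 H; have -> : `|P| = mx_norm P by [].
rewrite mx_normrE; apply: bigmax_le => // ij _; exact: H.
Qed.

Lemma mxn_mul (P Q : 'M[R]_d) : `|P * Q| <= d%:R * `|P| * `|Q|.
Proof.
apply: mxn_le; first by rewrite !mulr_ge0.
move=> i j; rewrite -mulmxE mxE.
apply: (le_trans (ler_norm_sum _ _ _)).
apply: (@le_trans _ _ (\sum_(k < d) `|P| * `|Q|)).
  apply: ler_sum => k _; rewrite normrM.
  by apply: ler_pM => //; apply: mxn_entry.
by rewrite sumr_const card_ord -mulrA mulr_natl.
Qed.

Lemma mxn_pow (X : 'M[R]_d) k : `|X ^+ k| <= (d%:R * `|X|) ^+ k.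
Proof.
elim: k => [|k IH].
  rewrite !expr0; apply: mxn_le => // i j.
  rewrite -idmxE mxE; case: (i == j) => /=; by rewrite ?normr1 ?normr0.
rewrite exprS [X in _ <= X]exprS.
apply: (le_trans (mxn_mul _ _)).
by apply: ler_wpM2l => //; rewrite mulr_ge0.
Qed.

Lemma mxn_ecm X k : `|ecm X k| <= exp_coeff (d%:R * `|X|) k.
Proof.
rewrite /ecm normrZ /exp_coeff /= ger0_norm ?invr_ge0 // mulrC.
by apply: ler_wpM2r; [rewrite invr_ge0 | apply: mxn_pow].
Qed.

Lemma cvg_ecm X : cvgn (series (ecm X) : ('M[R]_d)^nat).
Proof.
apply: normed_cvg.
apply: (series_le_cvg _ _ _ (is_cvg_series_exp_coeff (d%:R * `|X|))).
- by move=> n /=.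
- by move=> n; apply: exp_coeff_ge0; rewrite mulr_ge0.
- by move=> n /=; apply: mxn_ecm.
Qed.


Local Open Scope classical_set_scope.

Lemma sq0 (w : nat -> 'M[R]_d) (r : nat -> R) :
  (forall n, `|w n| <= r n) -> r @ \oo --> (0 : R) -> w @ \oo --> (0 : 'M[R]_d).
Proof.
move=> H r0; apply/cvgr0Pnorm_lt => e e0.
move/cvgr0Pnorm_lt: r0 => /(_ e e0).
apply: filterS => n; apply: le_lt_trans; exact: le_trans (H n) (ler_norm _).
Qed.

Lemma mxmul_cvg (u v : nat -> 'M[R]_d) (A B : 'M[R]_d) :
  u @ \oo --> A -> v @ \oo --> B -> (fun n => u n * v n) @ \oo --> A * B.
Proof.
move=> uA vB.
have uA0 : (fun n => `|u n - A|) @ \oo --> (0 : R).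
  apply/norm_cvg0P; rewrite -(subrr A); apply: cvgB => //; exact: cvg_cst.
have vB0 : (fun n => `|v n - B|) @ \oo --> (0 : R).
  apply/norm_cvg0P; rewrite -(subrr B); apply: cvgB => //; exact: cvg_cst.
apply: cvg_zero.
apply: (@sq0 _ (fun n => d%:R * `|u n - A| * (`|v n - B| + `|B|) + d%:R * `|A| * `|v n - B|)).
  move=> n.
  rewrite (_ : ((fun n0 : nat => u n0 * v n0) - cst (A * B)) n = u n * v n - A * B) //.
  rewrite (_ : u n * v n - A * B = (u n - A) * v n + A * (v n - B)); last first.
    by rewrite mulrBl mulrBr addrA subrK.
  apply: le_trans (ler_normD _ _) _; apply: lerD; last exact: mxn_mul.
  apply: le_trans (mxn_mul _ _) _; apply: ler_wpM2l; first by rewrite mulr_ge0.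
  by have := ler_normD (v n - B) B; rewrite subrK.
have -> : (0 : R) = d%:R * 0 * (0 + `|B|) + d%:R * `|A| * 0 by rewrite !mulr0 mul0r add0r.
apply: cvgD; apply: cvgM; try apply: cvgM; try apply: cvgD; by [exact: cvg_cst | ].
Qed.

Lemma series_ecm_add (X Y : 'M[R]_d) : X * Y = Y * X -> forall n,
  series (ecm (X + Y)) n = \sum_(i < n) \sum_(j < n - i) ecm X i * ecm Y j.
Proof.
move=> cXY n; rewrite /series /= big_mkord -(@cauchy_tri _ (fun i j => ecm X i * ecm Y j)).
by apply: eq_bigr => k _; apply: ecm_add.
Qed.

Lemma series_ecm_mul (X Y : 'M[R]_d) n :
  series (ecm X) n * series (ecm Y) n = \sum_(i < n) \sum_(j < n) ecm X i * ecm Y j.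
Proof.
rewrite /series /= !big_mkord mulr_suml; apply: eq_bigr => i _; by rewrite mulr_sumr.
Qed.

Lemma series_ecr_add (a b : R) n :
  series (exp_coeff (a + b)) n =
  \sum_(i < n) \sum_(j < n - i) exp_coeff a i * exp_coeff b j.
Proof.
rewrite /series /= big_mkord -(@cauchy_tri _ (fun i j => exp_coeff a i * exp_coeff b j)).
by apply: eq_bigr => k _; apply: ecr_add.
Qed.

Lemma series_ecr_mul (a b : R) n :
  series (exp_coeff a) n * series (exp_coeff b) n =
  \sum_(i < n) \sum_(j < n) exp_coeff a i * exp_coeff b j.
Proof.
rewrite /series /= !big_mkord mulr_suml; apply: eq_bigr => i _; by rewrite mulr_sumr.
Qed.

Lemma addKr' (V : zmodType) (x y : V) : (x + y) - x = y.
Proof. by rewrite addrC addKr. Qed.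

Lemma mexp_add (X Y : 'M[R]_d) : X * Y = Y * X -> mexp (X + Y) = mexp X * mexp Y.
Proof.
move=> cXY.
set a := d%:R * `|X|; set b := d%:R * `|Y|.
have a0 : 0 <= a by rewrite mulr_ge0.
have b0 : 0 <= b by rewrite mulr_ge0.
have D0 : (fun n => series (ecm X) n * series (ecm Y) n - series (ecm (X + Y)) n)
    @ \oo --> (0 : 'M[R]_d).
  apply: (@sq0 _ (fun n => d%:R * (series (exp_coeff a) n * series (exp_coeff b) n
                                   - series (exp_coeff (a + b)) n))).
    move=> n.
    rewrite series_ecm_mul series_ecm_add // series_ecr_mul series_ecr_add.
    rewrite (@square_split _ (fun i j => ecm X i * ecm Y j)).
    rewrite (@square_split _ (fun i j => exp_coeff a i * exp_coeff b j)).
    rewrite !addKr' mulr_sumr.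
    apply: le_trans (ler_norm_sum _ _ _) _; apply: ler_sum => i _.
    rewrite mulr_sumr.
    apply: le_trans (ler_norm_sum _ _ _) _; apply: ler_sum => j _.
    apply: le_trans (mxn_mul _ _) _; rewrite -mulrA; apply: ler_wpM2l => //.
    by apply: ler_pM => //; apply: mxn_ecm.
  have -> : (0 : R) = d%:R * (expR a * expR b - expR (a + b)).
    by rewrite expRD subrr mulr0.
  apply: cvgMr; apply: cvgB; last exact: (is_cvg_series_exp_coeff (a + b)).
  apply: cvgM; exact: is_cvg_series_exp_coeff.
have P := @mxmul_cvg _ _ (mexp X) (mexp Y) (cvg_ecm X) (cvg_ecm Y).
have Q : series (ecm (X + Y)) @ \oo --> mexp X * mexp Y.
  have E : (fun n => series (ecm X) n * series (ecm Y) n - (series (ecm X) n * series (ecm Y) n - series (ecm (X + Y)) n)) = series (ecm (X + Y)).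
    by apply: boolp.funext => n; rewrite opprB addrC subrK.
  rewrite -E -[mexp X * mexp Y]subr0; exact: cvgB P D0.
exact: (cvg_lim (@norm_hausdorff _ _) Q).
Qed.

Lemma mexp0 : mexp (0 : 'M[R]_d) = 1.
Proof.
apply: (cvg_lim (@norm_hausdorff _ _)).
apply: cvg_near_cst; near=> n.
have n0 : (0 < n)%N by near: n; exists 1%N.
rewrite /series /= -(prednK n0) big_nat_recl // expr0 fact0 invr1 scale1r big1 ?addr0 // => i _.
by rewrite expr0n /= scaler0.
Unshelve. all: by end_near.
Qed.

End Bin.
Definition LC (R : realType) (d M : nat) (gam : R) (A : 'I_M.+1 -> 'M[R]_d)
  (al : R) (be : 'I_M.+1 -> R) : 'M[R]_d :=
  al *: Lam gam A + \sum_(m < M.+1 | (0 < m)%N) be m *: A m.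
Arguments LC {R d M}.

Section LCsec.
Variables (R : realType) (d M : nat) (gam : R) (A : 'I_M.+1 -> 'M[R]_d).

Lemma LC_add al be al' be' :
  LC gam A al be + LC gam A al' be' = LC gam A (al + al') (fun m => be m + be' m).
Proof.
rewrite /LC scalerDl (eq_bigr _ (fun m _ => scalerDl _ _ _)) big_split /=.
by rewrite addrACA.
Qed.

Lemma LC_opp al be : - LC gam A al be = LC gam A (- al) (fun m => - be m).
Proof.
rewrite /LC opprD scaleNr -sumrN; congr (_ + _); apply: eq_bigr => m _.
by rewrite scaleNr.
Qed.

Lemma LC0 al be : al = 0 -> (forall m, be m = 0) -> LC gam A al be = 0.
Proof.
move=> -> h; rewrite /LC scale0r add0r big1 // => m _; by rewrite h scale0r.
Qed.

Lemma LC_ext al be al' be' : al = al' -> (forall m, be m = be' m) ->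
  LC gam A al be = LC gam A al' be'.
Proof. by move=> -> h; rewrite /LC; congr (_ + _); apply: eq_bigr => m _; rewrite h. Qed.

Lemma commZ (P Q : 'M[R]_d) (c : R) : P * Q = Q * P -> P * (c *: Q) = (c *: Q) * P.
Proof.
move=> h; rewrite -!mulmxE -scalemxAr -scalemxAl; congr (_ *: _); exact: h.
Qed.

Lemma commLC (P : 'M[R]_d) al be : P * Lam gam A = Lam gam A * P ->
  (forall m, P * A m = A m * P) -> P * LC gam A al be = LC gam A al be * P.
Proof.
move=> h1 h2; apply: commrD; first exact: commZ.
by apply: commr_sum => m _; apply: commZ.
Qed.

Hypothesis Acomm : forall m m' : 'I_M.+1, A m *m A m' = A m' *m A m.

Lemma ALam k : A k * Lam gam A = Lam gam A * A k.
Proof.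
rewrite /Lam; apply: commrB; first exact: Acomm.
apply: commZ; apply: commr_sum => m _; apply: commrX; exact: Acomm.
Qed.

Lemma LCcomm al be al' be' :
  LC gam A al be * LC gam A al' be' = LC gam A al' be' * LC gam A al be.
Proof.
apply: commLC.
  apply: commr_sym; apply: commLC => // m; exact: commr_sym (ALam m).
move=> m; apply: commr_sym; apply: commLC; [exact: ALam | move=> k; exact: Acomm].
Qed.

Lemma mexp_LC_add al be al' be' :
  mexp (LC gam A al be + LC gam A al' be') = mexp (LC gam A al be) * mexp (LC gam A al' be').
Proof. by apply: mexp_add; apply: LCcomm. Qed.

Lemma mexpN al be :
  mexp (LC gam A al be) * mexp (LC gam A (- al) (fun m => - be m)) = 1.
Proof.
rewrite -mexp_LC_add LC_add LC0 ?mexp0 // ?subrr // => m; exact: subrr.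
Qed.

Lemma mexpN' al be :
  mexp (LC gam A al be) *m mexp (LC gam A (- al) (fun m => - be m)) = 1%:M.
Proof. exact: mexpN. Qed.

End LCsec.

Theorem lemma4 (R : realType) (d M s N : nat) (t0 T gam : R)
  (A : 'I_M.+1 -> 'M[R]_d) (g : 'I_M.+1 -> R -> 'cV[R]_d -> 'cV[R]_d)
  (Z : nat -> 'I_M.+1 -> 'I_s -> 'I_s -> R) (z : nat -> 'I_M.+1 -> 'I_s -> R)
  (x0 : 'cV[R]_d) (W0 : 'I_M.+1 -> R)
  (* local scheme: approximations Y n and stage values H n *)
  (Y : nat -> 'cV[R]_d) (H : nat -> 'I_s -> 'cV[R]_d)
  (* global scheme: V0 n = V^0_n, W n = W^n, stage values H0 n *)
  (V0 : nat -> 'cV[R]_d) (W : nat -> 'I_M.+1 -> R) (H0 : nat -> 'I_s -> 'cV[R]_d) :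
  (0 < N)%N -> t0 < T ->
  (gam = 1 / 2 \/ gam = 0) ->
  (forall m m' : 'I_M.+1, A m *m A m' = A m' *m A m) ->
  (forall n, (n < N)%N -> cw z n ord0 = step_h N t0 T) ->
  (* local SRK Lawson scheme *)
  Y 0%N = x0 ->
  (forall n, (n < N)%N ->
     local_stage_eq N t0 T gam A g Z n (Y n) (H n) /\
     (forall Hs, local_stage_eq N t0 T gam A g Z n (Y n) Hs -> forall i, Hs i = H n i) /\
     Y n.+1 = local_update N t0 T gam A g Z z n (Y n) (H n)) ->
  (* global SRK Lawson scheme *)
  W0 ord0 = t0 -> W 0%N = W0 -> V0 0%N = x0 ->
  (forall n, (n < N)%N ->
     global_stage_eq N t0 T gam A g Z W0 (W n) n (V0 n) (H0 n) /\
     (forall Hs, global_stage_eq N t0 T gam A g Z W0 (W n) n (V0 n) Hs ->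
        forall i, Hs i = H0 n i) /\
     V0 n.+1 = global_update N t0 T gam A g Z z W0 (W n) n (V0 n) (H0 n) /\
     (forall m, W n.+1 m = W n m + cw z n m)) ->
  forall n, (n <= N)%N ->
    mexp (Lbar N t0 T gam A W0 (W n) n) *m V0 n = Y n.
Proof.
move=> N0 tT gamc Acomm cw0 Y0 Hloc W00 W0e V00 Hglob.
have LbE : forall W' n, Lbar N t0 T gam A W0 W' n =
    LC gam A (tgrid N t0 T n - t0) (fun m => W' m - W0 m) by [].
have L0E : forall W' n j, L0st N t0 T gam A Z W0 W' n j =
    LC gam A (tgrid N t0 T n + Defs.cst Z n j ord0 - t0) (fun m => W' m + Defs.cst Z n j m - W0 m) by [].
have DLstE : forall n j, DLst gam A Z n j = LC gam A (Defs.cst Z n j ord0) (fun m => Defs.cst Z n j m) by [].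
have DLE : forall n, DL gam A z n = LC gam A (cw z n ord0) (fun m => cw z n m) by [].
elim=> [|n IH] hn.
  rewrite LbE W0e LC0 ?mexp0; last by move=> m; rewrite subrr.
    by rewrite -idmxE mul1mx V00 Y0.
  by rewrite /tgrid mul0r addr0 subrr.
have hnN : (n < N)%N by [].
have {}IH := IH (ltnW hn).
have [Hst [Huniq HY]] := Hloc n hnN.
have [Gst [Guniq [HV HW]]] := Hglob n hnN.
set E := mexp (Lbar N t0 T gam A W0 (W n) n).
have F1 : forall j, E *m mexp (- L0st N t0 T gam A Z W0 (W n) n j) = mexp (- DLst gam A Z n j).
  move=> j; rewrite L0E DLstE !LC_opp.
  rewrite (_ : LC gam A _ _ = LC gam A (- (tgrid N t0 T n - t0)) (fun m => - (W n m - W0 m))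
       + LC gam A (- Defs.cst Z n j ord0) (fun m => - Defs.cst Z n j m)); last first.
    rewrite LC_add; apply: LC_ext => [|m]; rewrite -opprD; congr (- _); by rewrite addrAC.
  rewrite (@mexp_LC_add _ _ _ _ _ Acomm).
  rewrite -mulmxE mulmxA /E LbE (@mexpN' _ _ _ _ _ Acomm); exact: mul1mx.
have F2 : forall j (v : 'cV[R]_d), mexp (L0st N t0 T gam A Z W0 (W n) n j) *m v =
    mexp (DLst gam A Z n j) *m (E *m v).
  move=> j v; rewrite L0E DLstE.
  rewrite (_ : LC gam A _ _ = LC gam A (Defs.cst Z n j ord0) (fun m => Defs.cst Z n j m)
       + LC gam A (tgrid N t0 T n - t0) (fun m => W n m - W0 m)); last first.
    rewrite LC_add; apply: LC_ext => [|m]; ring.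
  by rewrite (@mexp_LC_add _ _ _ _ _ Acomm) /E LbE -mulmxE mulmxA.
have incr : forall coef, E *m global_incr N t0 T gam A g Z W0 (W n) n coef (H0 n) =
    local_incr N t0 T gam A g Z n coef (fun j => E *m H0 n j).
  move=> coef; rewrite /global_incr /local_incr mulmx_sumr; apply: eq_bigr => j _.
  rewrite mulmx_sumr; apply: eq_bigr => m _.
  by rewrite -scalemxAr [E *m (_ *m _)]mulmxA F1 F2.
have HsE : forall i, E *m H0 n i = H n i.
  apply: Huniq => i.
  by rewrite {1}(Gst i) mulmxDr /E IH incr.
have Hfun : H n = fun j => E *m H0 n j.
  by apply: boolp.funext => j; rewrite HsE.
rewrite HY HV /local_update /global_update Hfun -incr -IH -mulmxDr.
have HW' : W n.+1 = fun m => W n m + cw z n m by apply: boolp.funext.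
rewrite HW' LbE.
rewrite (_ : LC gam A _ _ = LC gam A (cw z n ord0) (fun m => cw z n m)
     + LC gam A (tgrid N t0 T n - t0) (fun m => W n m - W0 m)); last first.
  rewrite LC_add; apply: LC_ext => [|m]; last by ring.
  rewrite cw0 // /tgrid /step_h -addn1 natrD; ring.
by rewrite (@mexp_LC_add _ _ _ _ _ Acomm) -DLE /E LbE -mulmxE mulmxA.
Qed.
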